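(* Consider the zooming algorithm on an instance of the Lipschitz MAB problem. If phase $i$ is clean, then $\Delta(v)\le 4\,r_t(v)$ for every round $t$ of the phase and every strategy $v$ that is active at time $t$. Consequently $n_t(v)\le O(i)\,\Delta(v)^{-2}$ for such $v$ (absolute constant in $O(\cdot)$).
   Context: Lipschitz MAB problem on $(L,X)$ of diameter $\le1$: unknown $\mu:X\to[0,1]$ with $|\mu(x)-\mu(y)|\le L(x,y)$; playing $v$ yields an independent sample in $[0,1]$ of mean $\mu(v)$. $\mu^*=\sup_X\mu$ (not necessarily attained), $\Delta(v)=\mu^*-\mu(v)$. Zooming algorithm: phases $i=1,2,\dots$ of $2^i$ rounds; within phase $i$, $n_t(v)$ = number of plays of $v$ in this phase before round $t$, $\mu_t(v)$ = their average reward ($0$ if none), $r_t(v)=\sqrt{8i/(2+n_t(v))}$, $I_t(v)=\mu_t(v)+2r_t(v)$; at phase start nothing is active; $u$ is covered at $t$ if $u\in B(v,r_t(v))$ (open ball) for some active $v$; in each round, if some strategy is uncovered one such is activated, then an active strategy of maximal index is played (ties arbitrary). Phase $i$ is clean if $|\mu_t(v)-\mu(v)|\le r_t(v)$ for every strategy $v$ played at least once in the phase and every round $t$ of the phase. *)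

(* Defs.v *)
From Stdlib Require Import Reals Lra Lia Classical ClassicalEpsilon.
Open Scope R_scope.

(* Rounds of the phase are
   indexed t = 0, 1, ..., 2^i - 1 (position inside the phase).
   A run of the phase is described by:
     a : nat -> option X   (a t = Some u : strategy u activated in round t)
     p : nat -> X          (strategy played in round t)
     y : nat -> R          (reward observed in round t)                    *)

Definition eqb_cl {X : Type} (x y : X) : bool :=
  if excluded_middle_informative (x = y) then true else false.

Fixpoint nplays {X : Type} (p : nat -> X) (v : X) (t : nat) : nat :=
  match t with
  | O => O
  | S s => (if eqb_cl (p s) v then 1 else 0) + nplays p v s
  end%nat.

Fixpoint sumrew {X : Type} (p : nat -> X) (y : nat -> R) (v : X) (t : nat) : R :=
  match t with
  | O => 0
  | S s => (if eqb_cl (p s) v then y s else 0) + sumrew p y v s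
  end.

(* mu_t(v): average reward (0 if none) *)
Definition avgrew {X : Type} (p : nat -> X) (y : nat -> R) (v : X) (t : nat) : R :=
  match nplays p v t with
  | O => 0
  | n => sumrew p y v t / INR n
  end.

Definition rad (i n : nat) : R := sqrt (8 * INR i / (2 + INR n)).

Definition zindex {X : Type} (i : nat) (p : nat -> X) (y : nat -> R) (v : X) (t : nat) : R :=
  avgrew p y v t + 2 * rad i (nplays p v t).

Definition activated_before {X : Type} (a : nat -> option X) (v : X) (t : nat) : Prop :=
  exists s, (s < t)%nat /\ a s = Some v.

Definition active_at {X : Type} (a : nat -> option X) (v : X) (t : nat) : Prop :=
  exists s, (s <= t)%nat /\ a s = Some v.

(* u is covered at t (activation step of round t): u lies in the open ball
   B(v, r_t(v)) of some strategy v that is active at that moment *)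
Definition covered {X : Type} (L : X -> X -> R) (i : nat) (a : nat -> option X)
  (p : nat -> X) (u : X) (t : nat) : Prop :=
  exists v, activated_before a v t /\ L u v < rad i (nplays p v t).

Definition metric_diam1 {X : Type} (L : X -> X -> R) : Prop :=
  (forall x y, 0 <= L x y) /\ (forall x y, L x y = 0 <-> x = y) /\
  (forall x y, L x y = L y x) /\ (forall x y z, L x z <= L x y + L y z) /\
  (forall x y, L x y <= 1).

Definition lipschitz_payoff {X : Type} (L : X -> X -> R) (mu : X -> R) : Prop :=
  (forall x, 0 <= mu x <= 1) /\ (forall x y, Rabs (mu x - mu y) <= L x y).

Definition zooming_phase_run {X : Type} (L : X -> X -> R) (i : nat)
  (a : nat -> option X) (p : nat -> X) (y : nat -> R) : Prop :=
  forall t, (t < 2 ^ i)%nat ->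
    (forall u, a t = Some u -> ~ covered L i a p u t) /\
    (a t = None -> forall u, covered L i a p u t) /\
    active_at a (p t) t /\
    (forall w, active_at a w t -> zindex i p y w t <= zindex i p y (p t) t) /\
    0 <= y t <= 1.

Definition clean_phase {X : Type} (i : nat) (mu : X -> R)
  (p : nat -> X) (y : nat -> R) : Prop :=
  forall v t, (t < 2 ^ i)%nat -> (exists s, (s < 2 ^ i)%nat /\ p s = v) ->
    Rabs (avgrew p y v t - mu v) <= rad i (nplays p v t).

(* Main.v *)
Require Import Defs.
From Stdlib Require Import Reals Lra Lia Classical ClassicalEpsilon.
Open Scope R_scope.

Lemma eqb_cl_spec {X : Type} (x y : X) : eqb_cl x y = true <-> x = y.
Proof. unfold eqb_cl; destruct (excluded_middle_informative (x = y)); split; intros; congruence. Qed.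

Lemma nplays_last {X : Type} (p : nat -> X) v t :
  (0 < nplays p v t)%nat -> exists s, (s < t)%nat /\ p s = v /\ nplays p v t = S (nplays p v s).
Proof.
  induction t as [|t IH]; simpl; intros H; [lia|].
  destruct (eqb_cl (p t) v) eqn:E.
  - apply (proj1 (eqb_cl_spec _ _)) in E. exists t. split; [lia|]. split; [auto|]. lia.
  - destruct (IH ltac:(lia)) as [s [Hs [Hp He]]]. exists s. split; [lia|]. split; [auto|]. rewrite <- He. simpl; lia.
Qed.

Lemma Rabs_def2b x a : Rabs x <= a -> x <= a /\ - a <= x.
Proof. intros H. split; [pose proof (Rle_abs x)|pose proof (Rabs_Ropp x); pose proof (Rle_abs (-x))]; lra. Qed.

Lemma rad_pos i n : (1 <= i)%nat -> 0 < rad i n.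
Proof.
  intros Hi. unfold rad. apply sqrt_lt_R0.
  assert (1 <= INR i) by (apply (le_INR 1); auto). pose proof (pos_INR n).
  apply Rdiv_lt_0_compat; lra.
Qed.

Lemma rad_sq i n : (rad i n) * (rad i n) = 8 * INR i / (2 + INR n).
Proof.
  unfold rad. apply sqrt_sqrt. pose proof (pos_INR i). pose proof (pos_INR n).
  apply Rmult_le_pos; [lra|]. left; apply Rinv_0_lt_compat; lra.
Qed.

Lemma rad0_ge2 i : (1 <= i)%nat -> 2 <= rad i 0.
Proof.
  intros Hi. assert (1 <= INR i) by (apply (le_INR 1); auto).
  assert (H0 : 0 <= rad i 0) by (left; apply rad_pos; auto).
  pose proof (rad_sq i 0) as Hs. simpl in Hs.
  replace (8 * INR i / (2 + 0)) with (4 * INR i) in Hs by field. nra.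
Qed.

Lemma avg0 {X : Type} (p : nat -> X) y v t : nplays p v t = 0%nat -> avgrew p y v t = 0.
Proof. intros H; unfold avgrew; rewrite H; auto. Qed.

Theorem mainTheorem9 :
  exists C : R, 0 < C /\
  forall (X : Type) (L : X -> X -> R) (mu : X -> R) (mstar : R)
    (i : nat) (a : nat -> option X) (p : nat -> X) (y : nat -> R),
    metric_diam1 L ->
    lipschitz_payoff L mu ->
    is_lub (fun r => exists x, r = mu x) mstar ->
    (1 <= i)%nat ->
    zooming_phase_run L i a p y ->
    clean_phase i mu p y ->
    forall t v, (t < 2 ^ i)%nat -> active_at a v t ->
      mstar - mu v <= 4 * rad i (nplays p v t) /\
      INR (nplays p v t) * (mstar - mu v) ^ 2 <= C * INR i.
Proof.
  exists 128. split; [lra|].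
  intros X L mu mstar i a p y HL Hmu Hlub Hi Hrun Hcl t v Ht Hact.
  destruct HL as [HL0 [HLeq [HLs [HLt HL1]]]].
  destruct Hmu as [Hmu01 HmuL].
  assert (Hi1 : 1 <= INR i) by (apply (le_INR 1); auto).
  assert (Hr2 := rad0_ge2 i Hi).
  assert (Hbig : forall w s, nplays p w s = 0%nat -> 4 <= zindex i p y w s).
  { intros w s H. unfold zindex. rewrite avg0 by auto. rewrite H. lra. }
  assert (Hcl' : forall w s, (s < 2 ^ i)%nat -> (0 < nplays p w s)%nat ->
     Rabs (avgrew p y w s - mu w) <= rad i (nplays p w s)).
  { intros w s Hs Hn. destruct (nplays_last p w s Hn) as [s' [Hs' [Hp _]]].
    apply Hcl; auto. exists s'. split; [lia|auto]. }
  assert (HA : forall s, (s < 2 ^ i)%nat -> forall x, mu x <= zindex i p y (p s) s).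
  { intros s Hs x. destruct (Hrun s Hs) as [Ha1 [Ha2 [Hpa [Hmax Hy]]]].
    destruct (a s) as [u|] eqn:Eas.
    - assert (Hn : nplays p u s = 0%nat).
      { destruct (nplays p u s) eqn:En; auto.
        destruct (nplays_last p u s ltac:(lia)) as [s' [Hs' [Hp _]]].
        destruct (Hrun s' ltac:(lia)) as [_ [_ [[s'' [Hs'' Ha'']] _]]].
        exfalso. apply (Ha1 u eq_refl). exists u. split.
        - exists s''. split; [lia|]. rewrite Ha''; rewrite Hp; auto.
        - rewrite (proj2 (HLeq u u) eq_refl). apply rad_pos; auto. }
      assert (Hu : active_at a u s) by (exists s; split; auto).
      pose proof (Hmax u Hu). pose proof (Hbig u s Hn). pose proof (Hmu01 x). lra.
    - destruct (Ha2 eq_refl x) as [w [[s' [Hs' Hw]] HLw]].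
      assert (Hw' : active_at a w s) by (exists s'; split; [lia|auto]).
      pose proof (Hmax w Hw').
      pose proof (HmuL x w). pose proof (Rle_abs (mu x - mu w)).
      destruct (nplays p w s) eqn:En.
      + pose proof (Hbig w s En). pose proof (Hmu01 x). lra.
      + pose proof (Hcl' w s Hs ltac:(lia)) as Hc. rewrite En in Hc.
        pose proof (Rabs_def2b _ _ Hc) as [Hc1 Hc2].
        unfold zindex in *. rewrite En in *. lra. }
  assert (Hms : forall s, (s < 2 ^ i)%nat -> mstar <= zindex i p y (p s) s).
  { intros s Hs. apply (proj2 Hlub). intros r [x ->]. apply HA; auto. }
  assert (Hm1 : mstar <= 1).
  { apply (proj2 Hlub). intros r [x ->]. apply Hmu01. }
  assert (Hmv : mu v <= mstar) by (apply (proj1 Hlub); exists v; auto).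
  assert (P1 : mstar - mu v <= 4 * rad i (nplays p v t)).
  { destruct (nplays p v t) eqn:En.
    - pose proof (Hmu01 v). lra.
    - destruct (nplays_last p v t ltac:(lia)) as [s [Hs [Hp He]]].
      rewrite En in He. injection He as He. subst n.
      pose proof (Hms s ltac:(lia)) as H1. rewrite Hp in H1.
      assert (Hcs : (exists s0, (s0 < 2 ^ i)%nat /\ p s0 = v)) by (exists s; split; [lia|auto]).
      pose proof (Hcl v s ltac:(lia) Hcs) as Hc.
      pose proof (Rabs_def2b _ _ Hc) as [Hc1 Hc2].
      unfold zindex in H1.
      set (m := nplays p v s) in *.
      assert (H3 : 3 * rad i m <= 4 * rad i (S m)).
      { pose proof (rad_pos i m Hi). pose proof (rad_pos i (S m) Hi).
        apply Rsqr_incr_0_var; [|lra]. unfold Rsqr.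
        replace (3 * rad i m * (3 * rad i m)) with (9 * (rad i m * rad i m)) by ring.
        replace (4 * rad i (S m) * (4 * rad i (S m))) with (16 * (rad i (S m) * rad i (S m))) by ring.
        rewrite !rad_sq. rewrite S_INR. pose proof (pos_INR m).
        unfold Rdiv. apply Rmult_le_reg_r with ((2 + INR m) * (2 + (INR m + 1))); [nra|].
        replace (9 * (8 * INR i * / (2 + INR m)) * ((2 + INR m) * (2 + (INR m + 1))))
          with (72 * INR i * (3 + INR m)) by (field; lra).
        replace (16 * (8 * INR i * / (2 + (INR m + 1))) * ((2 + INR m) * (2 + (INR m + 1))))
          with (128 * INR i * (2 + INR m)) by (field; lra).
        nra. }
      lra. }
  split; auto.
  set (n := nplays p v t) in *.
  pose proof (rad_pos i n Hi). pose proof (rad_sq i n) as Hsq.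
  assert (Hd : (mstar - mu v) ^ 2 <= 16 * (rad i n * rad i n)) by nra.
  rewrite Hsq in Hd. pose proof (pos_INR n).
  assert (Hk : INR n * (16 * (8 * INR i / (2 + INR n))) <= 128 * INR i).
  { unfold Rdiv. apply Rmult_le_reg_r with (2 + INR n); [lra|].
    replace (INR n * (16 * (8 * INR i * / (2 + INR n))) * (2 + INR n))
      with (128 * INR i * INR n) by (field; lra). nra. }
  pose proof (Rmult_le_compat_l (INR n) _ _ H0 Hd). lra.
Qed.
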